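(* Let $\pi\subseteq\mathbb{R}^{s+1}$ be an absolutely rational subspace with $\dim\pi\ge 2$ and let $\Lambda=\mathbb{Z}^{s+1}\cap\pi$. Let $\zeta\in\Lambda$ be a point with positive first coordinate such that the sequence of best approximations to the ray $\ell(\zeta)$ is $\mathcal{B}(\ell(\zeta))=\{\zeta^1,\zeta^2,\dots,\zeta^\tau,\dots,\zeta^t\}$ with $\zeta^t=\zeta$, and such that $\mathcal{B}_\tau^t(\ell(\zeta))=\{\zeta^\tau,\dots,\zeta^t\}\subset\Lambda$. Suppose that $D(\zeta^\tau)<D(\xi)$ for every integer point $\xi$ not belonging to $\pi$ (with $D$ computed with respect to the ray $\ell(\zeta)$). Then there exists $\epsilon>0$ such that every ray $\ell'\subset K_\epsilon(\ell(\zeta))$ satisfies: (1) $\mathcal{B}(\ell')\supset\mathcal{B}(\ell(\zeta))$; (2) all best approximations to $\ell'$ lying between the approximations $\zeta^\tau$ and $\zeta^t$ (in the ordering of $\mathcal{B}(\ell')$) belong to $\pi$.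
   Context: In $\mathbb{R}^{s+1}$ with coordinates $(x,y_1,\dots,y_s)$, a ray $\ell$ is a ray from the origin lying in the half-space $\{x>0\}$. For small $\epsilon>0$, the open cone $K_\epsilon(\ell)$ consists of all rays $\ell'$ making an angle less than $\epsilon$ with $\ell$. For $\xi$ with $x>0$, $\ell(\xi)=\{\kappa\xi:\kappa\ge0\}$. A subspace $\pi$ is absolutely rational if the lattice $\pi\cap\mathbb{Z}^{s+1}$ has dimension $\dim\pi$. For a ray $\ell$ parallel to $(1,\beta_1,\dots,\beta_s)$ and an integer point $\xi=(q,b_1,\dots,b_s)$, $D(\xi)=\max_j|q\beta_j-b_j|$. A best approximation to $\ell$ is a best simultaneous approximation to $\beta=(\beta_1,\dots,\beta_s)$, i.e. an integer point $(p,a_1,\dots,a_s)$ with $p\ge1$ such that $\max_j|p\beta_j-a_j|<\max_j|q\beta_j-b_j|$ for all $1\le q\le p$ and $(b_1,\dots,b_s)\in\mathbb{Z}^s\setminus\{(a_1,\dots,a_s)\}$. When no $\beta_j$ is a half of an integer, these form a well-defined sequence $\mathcal{B}(\ell)=\{\zeta^1,\zeta^2,\dots\}$ ordered by increasing first coordinate $p^1<p^2<\dots$ (finite if $\ell$ contains a nonzero integer point, infinite otherwise), and $\mathcal{B}_k^t(\ell)=\{\zeta^k,\zeta^{k+1},\dots,\zeta^t\}$. *)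

(* Defs.v *)
From HB Require Import structures.
From mathcomp Require Import all_boot all_order all_algebra.
From mathcomp Require Import reals trigo.
Set Implicit Arguments. Unset Strict Implicit. Unset Printing Implicit Defensive.
Import Order.TTheory GRing.Theory Num.Theory.
Local Open Scope ring_scope.

(* R^{s+1} = 'rV[R]_(s.+1); coordinate 0 is x, coordinate (lift ord0 j) is y_(j+1).
   Integer points are 'rV[int]_(s.+1). *)

Section Defs.
Variable R : realType.
Variable s : nat.

Definition ycoord (j : 'I_s) : 'I_s.+1 := lift ord0 j.

Definition toR (xi : 'rV[int]_s.+1) : 'rV[R]_s.+1 := map_mx (fun z : int => z%:~R) xi.

Definition dotv (u w : 'rV[R]_s.+1) : R := \sum_(i < s.+1) u ord0 i * w ord0 i.
Definition normv (u : 'rV[R]_s.+1) : R := Num.sqrt (dotv u u).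

Definition angle (u w : 'rV[R]_s.+1) : R := acos (dotv u w / (normv u * normv w)).

(* the ray spanned by v (with v_0 > 0) is parallel to (1, beta) with
   beta_j = v_(j) / v_0; D v xi = max_j |q beta_j - b_j| for xi = (q, b). *)
Definition beta (v : 'rV[R]_s.+1) (j : 'I_s) : R := v ord0 (ycoord j) / v ord0 ord0.

Definition Dist (v : 'rV[R]_s.+1) (xi : 'rV[int]_s.+1) : R :=
  \big[Num.max/0]_(j < s)
     `| (xi ord0 ord0)%:~R * beta v j - (xi ord0 (ycoord j))%:~R |.

Definition best_approx (v : 'rV[R]_s.+1) (xi : 'rV[int]_s.+1) : Prop :=
  (1 <= xi ord0 ord0)%R /\
  forall eta : 'rV[int]_s.+1,
    (1 <= eta ord0 ord0)%R -> (eta ord0 ord0 <= xi ord0 ord0)%R -> eta <> xi ->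
    Dist v xi < Dist v eta.

(* a subspace pi is absolutely rational if the lattice pi ∩ Z^{s+1} has rank dim pi,
   i.e. pi contains dim pi linearly independent integer points *)
Definition in_sub (pi : {vspace 'rV[R]_s.+1}) (xi : 'rV[int]_s.+1) : Prop :=
  toR xi \in pi.

Definition absolutely_rational (pi : {vspace 'rV[R]_s.+1}) : Prop :=
  exists L : seq 'rV[int]_s.+1,
    [/\ forall xi, xi \in L -> in_sub pi xi,
        free (map toR L) & size L = \dim pi].

End Defs.
Arguments toR R {s} xi.

(* Main.v *)
Require Import Defs.
From HB Require Import structures.
From mathcomp Require Import all_boot all_order all_algebra.
From mathcomp Require Import reals trigo.
From mathcomp Require Import ring lra.
Import Order.TTheory GRing.Theory Num.Theory.
Local Open Scope ring_scope.

Section H.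
Variable R : realType.
Variable s : nat.

Lemma Dist_ge0 (v : 'rV[R]_s.+1) xi : 0 <= Dist v xi.
Proof. exact: bigmax_ge_id. Qed.

Lemma Dist_close (v w : 'rV[R]_s.+1) xi (d : R) : 0 <= d ->
  (forall j, `|beta v j - beta w j| <= d) ->
  Dist v xi <= Dist w xi + `|(xi ord0 ord0)%:~R| * d.
Proof.
move=> d0 H; apply: bigmax_le.
  by apply: addr_ge0; [exact: Dist_ge0| apply: mulr_ge0].
move=> j _.
set q : R := (xi ord0 ord0)%:~R; set b : R := (xi ord0 (ycoord j))%:~R.
have -> : q * beta v j - b = (q * beta w j - b) + q * (beta v j - beta w j) by ring.
apply: le_trans (ler_normD _ _) _; apply: lerD.
  rewrite /b /q /Dist; exact: (le_bigmax _ (fun j => `|(xi ord0 ord0)%:~R * beta w j - (xi ord0 (ycoord j))%:~R|)).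

by rewrite normrM; apply: ler_wpM2l.
Qed.

Lemma Dist_int (zeta eta : 'rV[int]_s.+1) : 0 < zeta ord0 ord0 ->
  exists n : int, Dist (toR R zeta) eta = n%:~R / (zeta ord0 ord0)%:~R.
Proof.
move=> zp.
rewrite /Dist; apply: (big_ind (fun x => exists n : int, x = n%:~R / (zeta ord0 ord0)%:~R)).
- by exists 0; rewrite mul0r.
- move=> x y [n ->] [m ->].
  by case: (leP (n%:~R / (zeta ord0 ord0)%:~R) (m%:~R / (zeta ord0 ord0)%:~R : R)) => _;
     [exists m | exists n].
move=> j _; exists `|eta ord0 ord0 * zeta ord0 (ycoord j) - zeta ord0 ord0 * eta ord0 (ycoord j)|.
rewrite /beta /toR !mxE.
have zR : 0 < (zeta ord0 ord0)%:~R :> R by rewrite ltr0z.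
rewrite intr_norm -[X in _ = _ * X](@ger0_norm _ ((zeta ord0 ord0)%:~R^-1 : R)); last first.
  by rewrite invr_ge0 ltW.
rewrite -normrM; congr `|_|; rewrite rmorphB !rmorphM /=; field.
by rewrite lt0r_neq0.
Qed.

Lemma Dist_gap (zeta e1 e2 : 'rV[int]_s.+1) : 0 < zeta ord0 ord0 ->
  Dist (toR R zeta) e1 < Dist (toR R zeta) e2 ->
  Dist (toR R zeta) e1 + ((zeta ord0 ord0)%:~R)^-1 <= Dist (toR R zeta) e2.
Proof.
move=> zp; have [n ->] := Dist_int zeta e1 zp; have [m ->] := Dist_int zeta e2 zp.
have zR : 0 < (zeta ord0 ord0)%:~R :> R by rewrite ltr0z.
rewrite ltr_pM2r ?invr_gt0 // ltr_int => nm.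
rewrite -[X in _ + X]mul1r -mulrDl ler_pM2r ?invr_gt0 //.
have : n + 1 <= m by rewrite lezD1.
by rewrite -(ler_int R) rmorphD.
Qed.

Lemma Dist_self (zeta : 'rV[int]_s.+1) : 0 < zeta ord0 ord0 ->
  Dist (toR R zeta) zeta = 0.
Proof.
move=> zp; apply/eqP; rewrite eq_le Dist_ge0 andbT; apply: bigmax_le => // j _.
rewrite /beta /toR !mxE.
have zR : 0 < (zeta ord0 ord0)%:~R :> R by rewrite ltr0z.
by rewrite mulrCA divff ?lt0r_neq0 // mulr1 subrr normr0.
Qed.


Lemma final_ineq (x y wj a r d : R) : 0 < a -> a <= 1 -> 0 < d ->
  `|x - wj| <= r -> `|y - a| <= r -> `|wj| <= 1 -> r <= a/2 -> r <= d*a^+2/4%:R ->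
  `|x/y - wj/a| <= d.
Proof.
move=> a0 a1 d0 hx hy hw ra rd.
have r0 : 0 <= r by apply: le_trans hx.
move: (hy); rewrite ler_norml => /andP[hy1 hy2].
have yp : a/2 <= y by lra.
have y0 : 0 < y by lra.
have -> : x/y - wj/a = ((x - wj) * a - wj * (y - a)) / (y * a).
  by field; rewrite ?lt0r_neq0.
have ya : 0 < y * a by apply: mulr_gt0.
rewrite normrM normfV (ger0_norm (ltW ya)) ler_pdivrMr //.
apply: le_trans (ler_normB _ _) _.
rewrite !normrM (ger0_norm (ltW a0)).
have h1 : `|x - wj| * a <= r by nra.
have h2 : `|wj| * `|y - a| <= r.
  rewrite -[r]mul1r; apply: ler_pM => //.
have : d * (a * a) / 2 <= d * (y * a) by nra.
have : 2 * r <= d * (a * a) / 2 by rewrite expr2 in rd; lra.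
lra.
Qed.


Lemma sum_scale (F G : 'I_s.+1 -> R) a b :
  \sum_i (F i * a) * (G i * b) = (\sum_i F i * G i) * (a * b).
Proof. by rewrite mulr_suml; apply: eq_bigr => i _; ring. Qed.

Lemma sum_sqB (u w : 'I_s.+1 -> R) :
  \sum_i (u i - w i) * (u i - w i) =
  \sum_i u i * u i + \sum_i w i * w i - (\sum_i u i * w i) *+ 2.
Proof.
rewrite -big_split /= -sumrMnl -sumrB; apply: eq_bigr => i _; ring.
Qed.

Lemma sum_sqD (u w : 'I_s.+1 -> R) :
  \sum_i (u i + w i) * (u i + w i) =
  \sum_i u i * u i + \sum_i w i * w i + (\sum_i u i * w i) *+ 2.
Proof.
rewrite -big_split /= -sumrMnl -big_split; apply: eq_bigr => i _ /=; ring.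
Qed.

Lemma term_le_sum (F : 'I_s.+1 -> R) k : (forall i, 0 <= F i) ->
  F k <= \sum_i F i.
Proof.
move=> H; rewrite (bigD1 k) //= lerDl; apply: sumr_ge0 => i _; exact: H.
Qed.

Lemma sq_ge0 (x : R) : 0 <= x * x.
Proof. by rewrite -expr2 sqr_ge0. Qed.

Lemma dot_pos (v : 'rV[R]_s.+1) : 0 < v ord0 ord0 -> 0 < dotv v v.
Proof.
move=> vp; rewrite /dotv (bigD1 ord0) //=.
have h1 : 0 < v ord0 ord0 * v ord0 ord0 by apply: mulr_gt0.
have h2 : 0 <= \sum_(i < s.+1 | i != ord0) v ord0 i * v ord0 i.
  by apply: sumr_ge0 => i _; apply: sq_ge0.
lra.
Qed.

Lemma norm_facts (v : 'rV[R]_s.+1) : 0 < v ord0 ord0 ->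
  0 < normv v /\ \sum_i (v ord0 i * (normv v)^-1) * (v ord0 i * (normv v)^-1) = 1.
Proof.
move=> vp; have dp := dot_pos v vp.
have np : 0 < normv v by rewrite /normv sqrtr_gt0.
split => //; rewrite sum_scale.
have : normv v ^+ 2 = dotv v v by rewrite /normv sqr_sqrtr // ltW.
rewrite expr2 => e; rewrite -invfM e; apply: divff.
by rewrite lt0r_neq0.
Qed.

Lemma sq_le_abs (x r : R) : 0 <= r -> x * x <= r * r -> `|x| <= r.
Proof. move=> r0 h; rewrite ler_norml; apply/andP; split; nra. Qed.

Lemma angle_close (z : 'rV[R]_s.+1) (d : R) : 0 < z ord0 ord0 -> 0 < d ->
  exists eps : R, 0 < eps /\ forall v : 'rV[R]_s.+1, 0 < v ord0 ord0 -> angle v z < eps ->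
    forall j, `|beta v j - beta z j| <= d.
Proof.
move=> zp d0.
have [nzp sw] := norm_facts z zp.
set nz := normv z in nzp sw.
set w := fun i => z ord0 i * nz^-1.
set a := w ord0.
have a0 : 0 < a by rewrite /a /w mulr_gt0 // invr_gt0.
have wle : forall i, w i * w i <= 1.
  move=> i; rewrite -sw; apply: (term_le_sum (fun i => w i * w i)) => k; exact: sq_ge0.
have a1 : a <= 1 by have := wle ord0; rewrite -/a; nra.
set r := Num.min (a/2) (d * a^+2/4%:R).
have r0 : 0 < r.
  rewrite /r lt_min; apply/andP; split; first lra.
  by rewrite !mulr_gt0 ?exprn_gt0 ?invr_gt0 ?ltr0n.
have ra : r <= a / 2 by rewrite /r ge_min lexx.
have rd : r <= d * a^+2/4%:R by rewrite /r ge_min lexx orbT.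
set c0 := 1 - r * r / 2.
have c0B : -1 <= c0 <= 1 by rewrite /c0; apply/andP; split; nra.
have c0lt : c0 < 1 by rewrite /c0; nra.
exists (acos c0); split; first by apply: acos_gt0; case/andP: c0B => -> _.
move=> v vp hang j.
have [nvp su] := norm_facts v vp.
set nv := normv v in nvp su.
set u := fun i => v ord0 i * nv^-1.
set c := dotv v z / (nv * nz).
have suw : \sum_i u i * w i = c.
  by rewrite /u /w sum_scale /c invfM.
have hB := sum_sqB u w; have hD := sum_sqD u w.
rewrite su sw suw in hB hD.
have sB : 0 <= \sum_i (u i - w i) * (u i - w i) by apply: sumr_ge0 => i _; exact: sq_ge0.
have sD : 0 <= \sum_i (u i + w i) * (u i + w i) by apply: sumr_ge0 => i _; exact: sq_ge0.
have cB : -1 <= c <= 1.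
  rewrite hB in sB; rewrite hD in sD; rewrite mulr2n in sB sD; apply/andP; split; lra.
have cc : c0 < c.
  move: hang; rewrite /angle -/nv -/nz -/c.
  rewrite -ltr_cos ?in_itv /= ?acos_ge0 ?acos_lepi // ?acosK ?in_itv //.
have hi : forall i, `|u i - w i| <= r.
  move=> i; apply: sq_le_abs; first exact: ltW.
  have := term_le_sum (fun i => (u i - w i) * (u i - w i)) i (fun k => sq_ge0 _).
  rewrite hB mulr2n /= => h; rewrite /c0 in cc; lra.
have hw : `|w (ycoord j)| <= 1 by apply: sq_le_abs => //; rewrite mul1r; exact: wle.
have -> : beta v j = u (ycoord j) / u ord0.
  rewrite /beta /u; field; apply/andP; split; rewrite lt0r_neq0 //.
have -> : beta z j = w (ycoord j) / a.
  rewrite /beta /a /w; field; apply/andP; split; rewrite lt0r_neq0 //.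
apply: final_ineq => //; exact: hi.
Qed.


Lemma q_bound (zeta xi : 'rV[int]_s.+1) : 0 < zeta ord0 ord0 ->
  best_approx (toR R zeta) xi -> xi ord0 ord0 <= zeta ord0 ord0.
Proof.
move=> zp [h1 h2]; rewrite leNgt; apply/negP => lt.
have : Dist (toR R zeta) xi < Dist (toR R zeta) zeta.
  apply: h2; first by rewrite -gtz0_ge1.
  - exact: ltW.
  - by move=> e; move: lt; rewrite e ltxx.
by rewrite Dist_self // ltNge Dist_ge0.
Qed.

End H.
Arguments Dist_gap {R s zeta e1 e2}.
Arguments Dist_close {R s v w} xi {d}.
Arguments q_bound {R s zeta xi}.
Arguments angle_close {R s z d}.

Theorem lemma2p1 (R : realType) (s : nat) (pi : {vspace 'rV[R]_s.+1})
  (zeta zeta_tau : 'rV[int]_s.+1) :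
  absolutely_rational pi ->
  (2 <= \dim pi)%N ->
  in_sub pi zeta ->
  0 < zeta ord0 ord0 ->
  best_approx (toR R zeta) zeta ->
  best_approx (toR R zeta) zeta_tau ->
  (forall xi, best_approx (toR R zeta) xi ->
     zeta_tau ord0 ord0 <= xi ord0 ord0 <= zeta ord0 ord0 -> in_sub pi xi) ->
  (forall xi : 'rV[int]_s.+1, ~ in_sub pi xi ->
     Dist (toR R zeta) zeta_tau < Dist (toR R zeta) xi) ->
  exists eps : R, 0 < eps /\
    forall v : 'rV[R]_s.+1, 0 < v ord0 ord0 -> angle v (toR R zeta) < eps ->
      (forall xi, best_approx (toR R zeta) xi -> best_approx v xi) /\
      (forall xi, best_approx v xi ->
         zeta_tau ord0 ord0 <= xi ord0 ord0 <= zeta ord0 ord0 -> in_sub pi xi).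
Proof.
move=> _ _ _ zp _ btau hB hD.
set P : R := (zeta ord0 ord0)%:~R.
have Pp : 0 < P by rewrite /P ltr0z.
set z := toR R zeta.
have z0 : 0 < z ord0 ord0 by rewrite /z /toR mxE.
set d := (4 * P * P)^-1.
have d0 : 0 < d by rewrite /d invr_gt0 !mulr_gt0 // ltr0n.
have [eps [eps0 Heps]] := angle_close z0 d0.
exists eps; split => // v vp hang.
have Hb := Heps v vp hang.
have Hb' : forall j, `|beta z j - beta v j| <= d by move=> j; rewrite distrC.
have err : forall xi : 'rV[int]_s.+1, 1 <= xi ord0 ord0 -> xi ord0 ord0 <= zeta ord0 ord0 ->
    `|(xi ord0 ord0)%:~R| * d <= (4 * P)^-1.
  move=> xi h1 h2.
  have q0 : 0 <= (xi ord0 ord0)%:~R :> R by rewrite ler0z (le_trans _ h1).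
  have qP : (xi ord0 ord0)%:~R <= P :> R by rewrite ler_int.
  rewrite ger0_norm // /d.
  have -> : (4 * P)^-1 = P * (4 * P * P)^-1 by field; rewrite lt0r_neq0.
  by apply: ler_wpM2r => //; rewrite ltW.
have key : forall a b : 'rV[int]_s.+1,
    1 <= a ord0 ord0 -> a ord0 ord0 <= zeta ord0 ord0 ->
    1 <= b ord0 ord0 -> b ord0 ord0 <= zeta ord0 ord0 ->
    Dist z a < Dist z b -> Dist v a < Dist v b.
  move=> a b a1 a2 b1 b2 lt.
  have g := Dist_gap zp lt.
  have ea := Dist_close a (ltW d0) Hb; have eb := Dist_close b (ltW d0) Hb'.
  have := err a a1 a2; have := err b b1 b2.
  have : (4 * P)^-1 * 2 < P^-1.
    have -> : (4 * P)^-1 * 2 = P^-1 / 2 by field; rewrite lt0r_neq0.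
    have : 0 < P^-1 by rewrite invr_gt0.
    lra.
  rewrite -/P in g; lra.
split.
- move=> xi bx; have xb := q_bound zp bx.
  case: bx => x1 x2; split => // eta e1 e2 ne.
  apply: key => //; first exact: le_trans e2 xb.
  exact: x2.
- move=> xi [x1 x2] /andP[t1 t2].
  case: (eqVneq xi zeta_tau) => [->|ne].
    apply: hB => //; rewrite lexx /=; exact: (q_bound zp btau).
  rewrite /in_sub; case: (boolP (toR R xi \in pi)) => // nin.
  have lt := hD xi (negP nin).
  have [tq1 _] := btau.
  have tz := q_bound zp btau.
  have := key _ _ tq1 tz x1 t2 lt.
  have := x2 zeta_tau tq1 t1 (fun e => ltac:(by rewrite e eqxx in ne)).
  move=> h h'; move: (lt_trans h h'); rewrite ltxx //.
Qed.
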